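(* Let $X$ be a real Banach space, let $V$ be a linear subspace of $X$ and let $x\in S_X$. Then the following are equivalent: (1) For every $v\in V$, $\Vert v+x\Vert=1+\Vert v\Vert$. (2) For every $v^*\in V^*$ there exists $x^*\in X^*$ extending $v^*$ (i.e. $x^*|_V=v^*$) such that $\Vert x^*\Vert=\Vert v^*\Vert$ and $x^*(x)=\Vert v^*\Vert$.
   Context: All Banach spaces are real. $S_X$ denotes the unit sphere of $X$ and $X^*$ its topological dual. *)

(* Defs.v *)
From Stdlib Require Export Reals.
Open Scope R_scope.

Record NormedSpace := mkNormedSpace {
  ns_car :> Type;
  ns_zero : ns_car;
  ns_add : ns_car -> ns_car -> ns_car;
  ns_opp : ns_car -> ns_car;
  ns_scal : R -> ns_car -> ns_car;
  ns_norm : ns_car -> R;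
  ns_add_assoc : forall x y z, ns_add x (ns_add y z) = ns_add (ns_add x y) z;
  ns_add_comm : forall x y, ns_add x y = ns_add y x;
  ns_add_zero : forall x, ns_add x ns_zero = x;
  ns_add_opp : forall x, ns_add x (ns_opp x) = ns_zero;
  ns_scal_assoc : forall a b x, ns_scal a (ns_scal b x) = ns_scal (a * b) x;
  ns_scal_one : forall x, ns_scal 1 x = x;
  ns_scal_distr_l : forall a x y, ns_scal a (ns_add x y) = ns_add (ns_scal a x) (ns_scal a y);
  ns_scal_distr_r : forall a b x, ns_scal (a + b) x = ns_add (ns_scal a x) (ns_scal b x);
  ns_norm_eq0 : forall x, ns_norm x = 0 -> x = ns_zero;
  ns_norm_triangle : forall x y, ns_norm (ns_add x y) <= ns_norm x + ns_norm y;
  ns_norm_scal : forall a x, ns_norm (ns_scal a x) = Rabs a * ns_norm x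
}.

Arguments ns_zero {n}.
Arguments ns_add {n}.
Arguments ns_opp {n}.
Arguments ns_scal {n}.
Arguments ns_norm {n}.

Definition complete (X : NormedSpace) : Prop :=
  forall u : nat -> X,
    (forall eps, 0 < eps -> exists N, forall m n, (N <= m)%nat -> (N <= n)%nat ->
        ns_norm (ns_add (u m) (ns_opp (u n))) < eps) ->
    exists l : X, forall eps, 0 < eps -> exists N, forall n, (N <= n)%nat ->
        ns_norm (ns_add (u n) (ns_opp l)) < eps.

Definition subspace (X : NormedSpace) (V : X -> Prop) : Prop :=
  V ns_zero /\
  (forall u v, V u -> V v -> V (ns_add u v)) /\
  (forall a v, V v -> V (ns_scal a v)).

(* f is a linear functional on the subspace V (only values on V matter). *)
Definition linear_on (X : NormedSpace) (V : X -> Prop) (f : X -> R) : Prop :=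
  (forall u v, V u -> V v -> f (ns_add u v) = f u + f v) /\
  (forall a v, V v -> f (ns_scal a v) = a * f v).

Definition bounded_on (X : NormedSpace) (V : X -> Prop) (f : X -> R) : Prop :=
  exists M, forall v, V v -> Rabs (f v) <= M * ns_norm v.

Definition dual_elt (X : NormedSpace) (V : X -> Prop) (f : X -> R) : Prop :=
  linear_on X V f /\ bounded_on X V f.

Definition dual_norm (X : NormedSpace) (V : X -> Prop) (f : X -> R) (c : R) : Prop :=
  is_lub (fun r => exists v, V v /\ ns_norm v <= 1 /\ r = Rabs (f v)) c.

Definition whole (X : NormedSpace) : X -> Prop := fun _ => True.

(* Main.v *)
Require Import Defs.
From Stdlib Require Import Reals Lra ClassicalEpsilon Classical.
From mathcomp Require classical_sets boolp.
Open Scope R_scope.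

Lemma zorn_prop (T:Type) (t0:T) (R: T->T->Prop) :
  (forall t, R t t) -> (forall r s t, R r s -> R s t -> R r t) ->
  (forall A: T->Prop, (forall s t, A s -> A t -> R s t \/ R t s) -> exists t, forall s, A s -> R s t) ->
  exists t, forall s, R t s -> R s t.
Proof.
intros Hr Ht Hc.
destruct (classical_sets.ZL_preorder t0 (R:=fun a b => boolp.asbool (R a b))) as [t Ht0].
- intro a. apply boolp.asboolT. auto.
- intros a b c H1 H2. apply boolp.asboolT. apply boolp.asboolW in H1. apply boolp.asboolW in H2. eauto.
- intros A HA. destruct (Hc A) as [t HAt].
  + intros s u Hs Hu. destruct (HA s u Hs Hu) as [H|H]; [left|right]; apply boolp.asboolW in H; exact H.
  + exists t. intros s Hs. apply boolp.asboolT. auto.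
- exists t. intros s Hs. specialize (Ht0 s (boolp.asboolT Hs)). apply boolp.asboolW in Ht0. exact Ht0.
Qed.

Notation "u ⊕ w" := (ns_add u w) (at level 50, left associativity).
Notation "a ⊙ u" := (ns_scal a u) (at level 40).
Notation nrm := ns_norm.

Section Alg.
Context {X : NormedSpace}.
Implicit Types x y z a b : X.

Lemma add0l (x : X) : ns_zero ⊕ x = x.
Proof. rewrite ns_add_comm. apply ns_add_zero. Qed.

Lemma add_cancel (a b : X) : a ⊕ b = a -> b = ns_zero.
Proof.
intro H. rewrite <- (ns_add_opp _ a). rewrite <- H at 1.
rewrite (ns_add_comm _ a b), <- ns_add_assoc, ns_add_opp, ns_add_zero. reflexivity.
Qed.

Lemma scal0 (x : X) : 0 ⊙ x = ns_zero.
Proof.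
apply (add_cancel (0 ⊙ x)). rewrite <- ns_scal_distr_r. f_equal. ring.
Qed.

Lemma scal_zero (r : R) : r ⊙ (@ns_zero X) = ns_zero.
Proof.
apply (add_cancel (r ⊙ ns_zero)). rewrite <- ns_scal_distr_l, ns_add_zero. reflexivity.
Qed.

Lemma opp_unique (x y : X) : x ⊕ y = ns_zero -> y = ns_opp x.
Proof.
intro H. rewrite <- (ns_add_zero _ y), <- (ns_add_opp _ x), ns_add_assoc,
  (ns_add_comm _ y x), H, add0l. reflexivity.
Qed.

Lemma opp_scal (x : X) : ns_opp x = (-1) ⊙ x.
Proof.
symmetry. apply opp_unique. rewrite <- (ns_scal_one _ x) at 1.
rewrite <- ns_scal_distr_r. replace (1 + -1) with 0 by ring. apply scal0.
Qed.

Lemma shuffle (a b c d : X) : (a ⊕ b) ⊕ (c ⊕ d) = (a ⊕ c) ⊕ (b ⊕ d).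
Proof.
rewrite !ns_add_assoc. f_equal. rewrite <- !ns_add_assoc. f_equal. apply ns_add_comm.
Qed.

Lemma norm0 : nrm (@ns_zero X) = 0.
Proof. rewrite <- (scal0 ns_zero), ns_norm_scal, Rabs_R0. ring. Qed.

Lemma norm_m1 (x : X) : nrm ((-1) ⊙ x) = nrm x.
Proof. rewrite ns_norm_scal. replace (Rabs (-1)) with 1; [ring|]. rewrite Rabs_left; lra. Qed.

Lemma norm_nonneg (x : X) : 0 <= nrm x.
Proof.
pose proof (ns_norm_triangle _ x ((-1) ⊙ x)) as H.
rewrite <- opp_scal, ns_add_opp, norm0, opp_scal, norm_m1 in H. lra.
Qed.

Lemma sub_self (x : X) : x ⊕ (-1) ⊙ x = ns_zero.
Proof. rewrite <- opp_scal. apply ns_add_opp. Qed.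

Lemma scal_m1m1 (x : X) : (-1) ⊙ ((-1) ⊙ x) = x.
Proof. rewrite ns_scal_assoc. replace (-1 * -1) with 1 by ring. apply ns_scal_one. Qed.

Lemma lin0 (W : X -> Prop) h : subspace X W -> linear_on X W h -> h ns_zero = 0.
Proof.
intros [H0 [Ha Hs]] [La Ls]. rewrite <- (scal0 ns_zero), Ls by exact H0. ring.
Qed.

Lemma decomp_unique (W : X -> Prop) (y0 w1 w2 : X) (t1 t2 : R) :
  subspace X W -> ~ W y0 -> W w1 -> W w2 -> w1 ⊕ t1 ⊙ y0 = w2 ⊕ t2 ⊙ y0 -> w1 = w2 /\ t1 = t2.
Proof.
intros HW Hy H1 H2 E. destruct HW as [H0 [Ha Hs]].
assert (E' : w1 ⊕ (-1) ⊙ w2 = (t2 + - t1) ⊙ y0).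
{ apply (f_equal (fun z => z ⊕ ((-1) ⊙ w2 ⊕ (-t1) ⊙ y0))) in E.
  rewrite (shuffle w1), (shuffle w2) in E. rewrite <- !ns_scal_distr_r in E.
  rewrite sub_self, add0l in E. replace (t1 + - t1) with 0 in E by ring.
  rewrite scal0, ns_add_zero in E. exact E. }
destruct (Req_dec t1 t2) as [Et|Nt].
- split; [|exact Et]. subst t2. replace (t1 + - t1) with 0 in E' by ring.
  rewrite scal0 in E'. apply opp_unique in E'. rewrite opp_scal in E'.
  rewrite <- (scal_m1m1 w2), E', scal_m1m1. reflexivity.
- exfalso. apply Hy.
  assert (Hd : t2 + - t1 <> 0) by lra.
  apply (f_equal (fun z => (/ (t2 + - t1)) ⊙ z)) in E'.
  rewrite ns_scal_assoc, Rinv_l, ns_scal_one in E' by exact Hd.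
  rewrite <- E'. apply Hs. apply Ha; [exact H1|]. apply Hs. exact H2.
Qed.

End Alg.

Section HB.
Context {X : NormedSpace}.

Lemma alpha_exists (W : X -> Prop) (h : X -> R) (c : R) (y0 : X) :
  0 <= c -> subspace X W -> linear_on X W h -> (forall w, W w -> h w <= c * nrm w) ->
  exists a, forall w t, W w -> h w + t * a <= c * nrm (w ⊕ t ⊙ y0).
Proof.
intros Hc HW Hl Hb.
pose proof HW as [H0 [Ha Hs]]. pose proof Hl as [La Ls].
assert (K : forall w1 w2, W w1 -> W w2 ->
   h w1 - c * nrm (w1 ⊕ (-1) ⊙ y0) <= c * nrm (w2 ⊕ y0) - h w2).
{ intros w1 w2 H1 H2.
  pose proof (Hb _ (Ha _ _ H1 H2)) as B. rewrite La in B by assumption.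
  assert (E : w1 ⊕ w2 = (w1 ⊕ (-1) ⊙ y0) ⊕ (w2 ⊕ y0)).
  { rewrite shuffle, (ns_add_comm _ ((-1) ⊙ y0)), sub_self, ns_add_zero. reflexivity. }
  pose proof (ns_norm_triangle _ (w1 ⊕ (-1) ⊙ y0) (w2 ⊕ y0)) as T. rewrite <- E in T.
  assert (c * nrm (w1 ⊕ w2) <= c * (nrm (w1 ⊕ (-1) ⊙ y0) + nrm (w2 ⊕ y0))).
  { apply Rmult_le_compat_l; assumption. }
  lra. }
set (S := fun r => exists w, W w /\ r = h w - c * nrm (w ⊕ (-1) ⊙ y0)).
assert (HSb : bound S).
{ exists (c * nrm (ns_zero ⊕ y0) - h ns_zero). intros r [w [Hw ->]]. apply K; assumption. }
assert (HSn : exists r, S r).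
{ exists (h ns_zero - c * nrm (ns_zero ⊕ (-1) ⊙ y0)). exists ns_zero. split; auto. }
destruct (completeness S HSb HSn) as [a [Hub Hlub]].
assert (A1 : forall w, W w -> a <= c * nrm (w ⊕ y0) - h w).
{ intros w Hw. apply Hlub. intros r [w1 [Hw1 ->]]. apply K; assumption. }
assert (A2 : forall w, W w -> h w - c * nrm (w ⊕ (-1) ⊙ y0) <= a).
{ intros w Hw. apply Hub. exists w. split; auto. }
exists a. intros w t Hw.
destruct (Req_dec t 0) as [Et|Nt].
- subst t. rewrite scal0, ns_add_zero. specialize (Hb w Hw). lra.
- set (w' := (/ t) ⊙ w).
  assert (Hw' : W w') by (apply Hs; exact Hw).
  assert (Ed : w ⊕ t ⊙ y0 = t ⊙ (w' ⊕ y0)).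
  { unfold w'. rewrite ns_scal_distr_l, ns_scal_assoc, Rinv_r, ns_scal_one by exact Nt. reflexivity. }
  assert (Eh : h w = t * h w').
  { unfold w'. rewrite Ls by exact Hw. field. exact Nt. }
  rewrite Ed, ns_norm_scal, Eh.
  set (N := nrm (w' ⊕ y0)).
  destruct (Rlt_or_le 0 t) as [Tp|Tn].
  + rewrite Rabs_pos_eq by lra. specialize (A1 w' Hw'). fold N in A1.
    assert (t * a <= t * (c * N - h w')) by (apply Rmult_le_compat_l; lra).
    nra.
  + rewrite Rabs_left by lra. specialize (A2 ((-1) ⊙ w') (Hs _ _ Hw')).
    rewrite Ls in A2 by exact Hw'.
    rewrite <- ns_scal_distr_l, norm_m1 in A2. fold N in A2.
    assert (t * a <= t * (-1 * h w' - c * N)) by (apply Rmult_le_compat_neg_l; lra).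
    nra.
Qed.

Lemma ext_step (W : X -> Prop) (h : X -> R) (c : R) (y0 : X) (a : R) :
  subspace X W -> linear_on X W h -> ~ W y0 ->
  (forall w t, W w -> h w + t * a <= c * nrm (w ⊕ t ⊙ y0)) ->
  exists (W' : X -> Prop) (h' : X -> R), subspace X W' /\ linear_on X W' h' /\ W' y0 /\ h' y0 = a /\
   (forall w, W w -> W' w /\ h' w = h w) /\ (forall z, W' z -> h' z <= c * nrm z).
Proof.
intros HW Hl Hy Hineq.
pose proof HW as [H0 [Ha Hs]]. pose proof Hl as [La Ls].
set (P := fun z (p : X * R) => W (fst p) /\ z = fst p ⊕ snd p ⊙ y0).
set (inh := inhabits ((@ns_zero X), 0)).
set (W' := fun z => exists p, P z p).
set (h' := fun z => let p := epsilon inh (P z) in h (fst p) + snd p * a).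
assert (key : forall w t, W w -> h' (w ⊕ t ⊙ y0) = h w + t * a).
{ intros w t Hw. unfold h'.
  assert (Hex : exists p, P (w ⊕ t ⊙ y0) p) by (exists (w, t); split; auto).
  destruct (epsilon_spec inh _ Hex) as [Hp Ep].
  destruct (decomp_unique W y0 w _ t _ HW Hy Hw Hp Ep) as [E1 E2].
  rewrite <- E1, <- E2. reflexivity. }
exists W', h'.
split; [|split; [|split; [|split; [|split]]]].
- split; [|split].
  + exists (ns_zero, 0). split; [exact H0|]. simpl. rewrite scal0, ns_add_zero. reflexivity.
  + intros u v [[w1 t1] [Hw1 E1]] [[w2 t2] [Hw2 E2]]. simpl in *. subst u v.
    exists (w1 ⊕ w2, t1 + t2). split; simpl; [auto|].
    rewrite shuffle, ns_scal_distr_r. reflexivity.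
  + intros r v [[w1 t1] [Hw1 E1]]. simpl in *. subst v.
    exists (r ⊙ w1, r * t1). split; simpl; [auto|].
    rewrite ns_scal_distr_l, ns_scal_assoc. reflexivity.
- split.
  + intros u v [[w1 t1] [Hw1 E1]] [[w2 t2] [Hw2 E2]]. simpl in *. subst u v.
    rewrite shuffle, <- ns_scal_distr_r, !key by auto. rewrite La by auto. ring.
  + intros r v [[w1 t1] [Hw1 E1]]. simpl in *. subst v.
    rewrite ns_scal_distr_l, ns_scal_assoc, !key by auto. rewrite Ls by auto. ring.
- exists (ns_zero, 1). split; simpl; [auto|]. rewrite ns_scal_one, add0l. reflexivity.
- replace y0 with (ns_zero ⊕ 1 ⊙ y0) by (rewrite ns_scal_one, add0l; reflexivity).
  rewrite key by auto. rewrite (lin0 W h HW Hl). ring.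
- intros w Hw. split.
  + exists (w, 0). split; simpl; [auto|]. rewrite scal0, ns_add_zero. reflexivity.
  + replace w with (w ⊕ 0 ⊙ y0) at 1 by (rewrite scal0, ns_add_zero; reflexivity).
    rewrite key by auto. ring.
- intros z [[w1 t1] [Hw1 E1]]. simpl in *. subst z. rewrite key by auto. apply Hineq. exact Hw1.
Qed.

End HB.

Record pext {X : NormedSpace} (W0 : X -> Prop) (f0 : X -> R) (c : R) := mkPext {
  pW : X -> Prop; ph : X -> R;
  p_sub : subspace X pW; p_lin : linear_on X pW ph;
  p_base : forall w, W0 w -> pW w /\ ph w = f0 w;
  p_bnd : forall z, pW z -> ph z <= c * nrm z }.
Arguments pW {X W0 f0 c}. Arguments ph {X W0 f0 c}.
Arguments p_sub {X W0 f0 c}. Arguments p_lin {X W0 f0 c}.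
Arguments p_base {X W0 f0 c}. Arguments p_bnd {X W0 f0 c}.
Arguments mkPext {X W0 f0 c}.

Lemma hahn_banach {X : NormedSpace} (W0 : X -> Prop) (f0 : X -> R) (c : R) :
  0 <= c -> subspace X W0 -> linear_on X W0 f0 -> (forall w, W0 w -> f0 w <= c * nrm w) ->
  exists g, linear_on X (whole X) g /\ (forall w, W0 w -> g w = f0 w) /\ (forall y, g y <= c * nrm y).
Proof.
intros Hc HW0 Hl0 Hb0.
set (Rl := fun (s t : pext W0 f0 c) => forall y, pW s y -> pW t y /\ ph t y = ph s y).
set (t0 := mkPext W0 f0 HW0 Hl0 (fun w Hw => conj Hw eq_refl) Hb0).
destruct (zorn_prop _ t0 Rl) as [t Ht].
- intros s y Hy. auto.
- intros r s u H1 H2 y Hy. destruct (H1 y Hy) as [A1 B1]. destruct (H2 y A1) as [A2 B2].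
  split; [auto|congruence].
- intros A Htot. destruct (classic (exists t, A t)) as [[t1 Ht1]|Hne].
  2:{ exists t0. intros s Hs. exfalso. eauto. }
  set (inh := inhabits t0).
  set (WU := fun y => exists t, A t /\ pW t y).
  set (hU := fun y => ph (epsilon inh (fun t => A t /\ pW t y)) y).
  assert (spec : forall t y, A t -> pW t y -> hU y = ph t y).
  { intros t y HA Hy. unfold hU.
    assert (Hex : exists t, A t /\ pW t y) by eauto.
    destruct (epsilon_spec inh _ Hex) as [HAe Hye].
    destruct (Htot t _ HA HAe) as [Rt|Rt].
    - apply (Rt y Hy).
    - symmetry. apply (Rt y Hye). }
  assert (common : forall y1 y2, WU y1 -> WU y2 -> exists t, A t /\ pW t y1 /\ pW t y2).
  { intros y1 y2 [s1 [HA1 Hy1]] [s2 [HA2 Hy2]].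
    destruct (Htot s1 s2 HA1 HA2) as [Rt|Rt].
    - exists s2. split; [auto|]. split; [apply (Rt y1 Hy1)|auto].
    - exists s1. split; [auto|]. split; [auto|apply (Rt y2 Hy2)]. }
  assert (Hsub : subspace X WU).
  { split; [|split].
    - exists t1. split; [auto|]. apply (p_sub t1).
    - intros u v Hu Hv. destruct (common u v Hu Hv) as [s [HA [H1 H2]]].
      exists s. split; [auto|]. apply (p_sub s); auto.
    - intros r v [s [HA Hv]]. exists s. split; [auto|]. apply (p_sub s); auto. }
  assert (Hlin : linear_on X WU hU).
  { split.
    - intros u v Hu Hv. destruct (common u v Hu Hv) as [s [HA [H1 H2]]].
      assert (Huv : pW s (u ⊕ v)) by (apply (p_sub s); auto).
      rewrite !(spec s) by auto. apply (p_lin s); auto.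
    - intros r v [s [HA Hv]].
      assert (Hrv : pW s (r ⊙ v)) by (apply (p_sub s); auto).
      rewrite !(spec s) by auto. apply (p_lin s); auto. }
  assert (Hbase : forall w, W0 w -> WU w /\ hU w = f0 w).
  { intros w Hw. destruct (p_base t1 w Hw) as [H1 H2]. split.
    - exists t1. auto.
    - rewrite (spec t1) by auto. exact H2. }
  assert (Hbnd : forall z, WU z -> hU z <= c * nrm z).
  { intros z [s [HA Hz]]. rewrite (spec s) by auto. apply (p_bnd s). exact Hz. }
  exists (mkPext WU hU Hsub Hlin Hbase Hbnd).
  intros s HA y Hy. simpl. split.
  + exists s. auto.
  + apply spec; auto.
- assert (Hall : forall y, pW t y).
  { intros y. apply NNPP. intro Hny.
    destruct (alpha_exists (pW t) (ph t) c y Hc (p_sub t) (p_lin t) (p_bnd t)) as [a Ha].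
    destruct (ext_step (pW t) (ph t) c y a (p_sub t) (p_lin t) Hny Ha)
      as [W' [h' [Hs' [Hl' [Hy' [_ [Hext Hb']]]]]]].
    assert (Hbase' : forall w, W0 w -> W' w /\ h' w = f0 w).
    { intros w Hw. destruct (p_base t w Hw) as [H1 H2]. destruct (Hext w H1) as [H3 H4].
      split; congruence. }
    set (s := mkPext W' h' Hs' Hl' Hbase' Hb').
    assert (Rts : Rl t s) by (intros z Hz; apply Hext; exact Hz).
    destruct (Ht s Rts y Hy') as [Hc' _]. exact (Hny Hc'). }
  exists (ph t). split; [|split].
  + split.
    * intros u v _ _. apply (p_lin t); auto.
    * intros r v _. apply (p_lin t); auto.
  + intros w Hw. apply (p_base t w Hw).
  + intros y. apply (p_bnd t). auto.
Qed.

Lemma dual_norm_bound {X : NormedSpace} (W : X -> Prop) (f : X -> R) (c : R) :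
  subspace X W -> linear_on X W f -> dual_norm X W f c -> forall w, W w -> Rabs (f w) <= c * nrm w.
Proof.
intros HW Hl [Hub _] w Hw. pose proof HW as [H0 [Ha Hs]]. pose proof Hl as [La Ls].
destruct (Req_dec (nrm w) 0) as [E|N].
- apply ns_norm_eq0 in E. subst w. rewrite (lin0 W f HW Hl), norm0, Rabs_R0. lra.
- pose proof (norm_nonneg w) as Nn.
  assert (Hu : Rabs (f ((/ nrm w) ⊙ w)) <= c).
  { apply Hub. exists ((/ nrm w) ⊙ w). split; [auto|]. split; [|reflexivity].
    rewrite ns_norm_scal, Rabs_pos_eq.
    - rewrite Rinv_l by exact N. lra.
    - left. apply Rinv_0_lt_compat. lra. }
  rewrite Ls, Rabs_mult, Rabs_pos_eq in Hu by (auto; left; apply Rinv_0_lt_compat; lra).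
  assert (nrm w * (/ nrm w * Rabs (f w)) <= nrm w * c) by (apply Rmult_le_compat_l; lra).
  rewrite <- Rmult_assoc, Rinv_r, Rmult_1_l in H by exact N. lra.
Qed.

Lemma dual_norm_nonneg {X : NormedSpace} (W : X -> Prop) (f : X -> R) (c : R) :
  subspace X W -> linear_on X W f -> dual_norm X W f c -> 0 <= c.
Proof.
intros HW Hl [Hub _]. pose proof HW as [H0 _].
replace 0 with (Rabs (f ns_zero)) by (rewrite (lin0 W f HW Hl); apply Rabs_R0).
apply Hub. exists ns_zero. split; [auto|]. rewrite norm0. split; [lra|reflexivity].
Qed.

Lemma abs_bound {X : NormedSpace} (g : X -> R) (c : R) :
  linear_on X (whole X) g -> (forall y, g y <= c * nrm y) -> forall y, Rabs (g y) <= c * nrm y.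
Proof.
intros [La Ls] Hb y. pose proof (Hb ((-1) ⊙ y)) as H. rewrite Ls, norm_m1 in H by exact I.
pose proof (Hb y). unfold Rabs. destruct (Rcase_abs (g y)); lra.
Qed.

Theorem mainTheorem1 (X : NormedSpace) (HX : complete X) (V : X -> Prop)
  (HV : subspace X V) (x : X) (Hx : ns_norm x = 1) :
  (forall v, V v -> ns_norm (ns_add v x) = 1 + ns_norm v) <->
  (forall (f : X -> R) (c : R), dual_elt X V f -> dual_norm X V f c ->
     exists g : X -> R,
       dual_elt X (whole X) g /\
       (forall v, V v -> g v = f v) /\
       dual_norm X (whole X) g c /\
       g x = c).
Proof.
pose proof HV as [H0 [Ha Hs]].
split.
- intros H1 f c [Hl _] Hdn.
  pose proof (dual_norm_nonneg V f c HV Hl Hdn) as Hc.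
  pose proof (dual_norm_bound V f c HV Hl Hdn) as Hfb.
  assert (Hnx : ~ V x).
  { intro Hvx. specialize (H1 ((-1) ⊙ x) (Hs _ _ Hvx)).
    rewrite ns_add_comm, sub_self, norm0, norm_m1, Hx in H1. lra. }
  assert (Hineq : forall w t, V w -> f w + t * c <= c * nrm (w ⊕ t ⊙ x)).
  { intros w t Hw. destruct (Req_dec t 0) as [Et|Nt].
    - subst t. rewrite scal0, ns_add_zero. pose proof (Hfb w Hw). pose proof (Rle_abs (f w)). lra.
    - assert (Ed : w ⊕ t ⊙ x = t ⊙ ((/ t) ⊙ w ⊕ x)).
      { rewrite ns_scal_distr_l, ns_scal_assoc, Rinv_r, ns_scal_one by exact Nt. reflexivity. }
      rewrite Ed, ns_norm_scal, H1 by (apply Hs; exact Hw).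
      rewrite ns_norm_scal, Rabs_Rinv by exact Nt.
      assert (Ht : Rabs t * (1 + (/ Rabs t * nrm w)) = Rabs t + nrm w).
      { field. apply Rabs_no_R0. exact Nt. }
      rewrite Ht.
      pose proof (Hfb w Hw). pose proof (Rle_abs (f w)). pose proof (Rle_abs t).
      assert (t * c <= Rabs t * c) by (apply Rmult_le_compat_r; lra).
      nra. }
  destruct (ext_step V f c x c HV Hl Hnx Hineq) as [W' [h' [Hs' [Hl' [Hx' [Hhx [Hext Hb']]]]]]].
  destruct (hahn_banach W' h' c Hc Hs' Hl' Hb') as [g [Hgl [Hgext Hgb]]].
  pose proof (abs_bound g c Hgl Hgb) as Hgabs.
  exists g. split; [|split; [|split]].
  + split; [exact Hgl|]. exists c. intros v _. apply Hgabs.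
  + intros v Hv. destruct (Hext v Hv) as [A B]. rewrite Hgext by exact A. exact B.
  + split.
    * intros r [v [_ [Hv ->]]]. pose proof (Hgabs v). pose proof (norm_nonneg v).
      assert (c * nrm v <= c * 1) by (apply Rmult_le_compat_l; lra). lra.
    * intros b Hb. destruct Hdn as [_ Hleast]. apply Hleast.
      intros r [v [HvV [Hv ->]]]. apply Hb. exists v. split; [exact I|]. split; [exact Hv|].
      destruct (Hext v HvV) as [A B]. rewrite Hgext by exact A. rewrite B. reflexivity.
  + rewrite Hgext by exact Hx'. exact Hhx.
- intros H2 v Hv. apply Rle_antisym.
  { pose proof (ns_norm_triangle _ v x). lra. }
  destruct (Req_dec (nrm v) 0) as [E|N].
  { rewrite E. apply ns_norm_eq0 in E. subst v. rewrite add0l. lra. }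
  pose proof (norm_nonneg v) as Nn.
  set (Z := fun z : X => z = ns_zero).
  assert (HZ : subspace X Z).
  { unfold Z. split; [reflexivity|split].
    - intros u w -> ->. apply ns_add_zero.
    - intros r w ->. apply scal_zero. }
  assert (HZl : linear_on X Z (fun _ => 0)).
  { split; intros; ring. }
  assert (Hnv : ~ Z v). { unfold Z. intro E. subst v. apply N. apply norm0. }
  assert (Hin : forall w t, Z w -> (fun _ : X => 0) w + t * nrm v <= 1 * nrm (w ⊕ t ⊙ v)).
  { intros w t Hw. unfold Z in Hw. subst w. rewrite add0l, ns_norm_scal.
    pose proof (Rle_abs t). assert (t * nrm v <= Rabs t * nrm v) by (apply Rmult_le_compat_r; lra).
    lra. }
  destruct (ext_step Z (fun _ => 0) 1 v (nrm v) HZ HZl Hnv Hin)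
    as [W' [h' [Hs' [Hl' [Hv' [Hhv [_ Hb']]]]]]].
  destruct (hahn_banach W' h' 1 ltac:(lra) Hs' Hl' Hb') as [g0 [Hgl [Hgext Hgb]]].
  pose proof (abs_bound g0 1 Hgl Hgb) as Hgabs.
  assert (Hg0v : g0 v = nrm v) by (rewrite Hgext by exact Hv'; exact Hhv).
  destruct Hgl as [La Ls].
  assert (Hde : dual_elt X V g0).
  { split; [split|].
    - intros; apply La; exact I.
    - intros; apply Ls; exact I.
    - exists 1. intros w _. apply Hgabs. }
  assert (Hdn : dual_norm X V g0 1).
  { split.
    - intros r [w [_ [Hw ->]]]. pose proof (Hgabs w). lra.
    - intros b Hb. apply Hb. exists ((/ nrm v) ⊙ v). split; [auto|]. split.
      + rewrite ns_norm_scal, Rabs_pos_eq, Rinv_l by (auto; left; apply Rinv_0_lt_compat; lra). lra.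
      + rewrite Ls by exact I. rewrite Hg0v, Rinv_l by exact N. rewrite Rabs_R1. reflexivity. }
  destruct (H2 g0 1 Hde Hdn) as [g [[[Ga Gs] _] [Gext [Gdn Gx]]]].
  assert (HWl : linear_on X (whole X) g) by (split; auto).
  pose proof (dual_norm_bound (whole X) g 1 ltac:(split; [exact I|split; intros; exact I]) HWl Gdn (v ⊕ x) I) as Hb.
  rewrite Ga in Hb by exact I. rewrite Gext, Hg0v, Gx in Hb by exact Hv.
  pose proof (Rle_abs (nrm v + 1)). lra.
Qed.
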